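(* For $I\subseteq\mathbb{N}$ and unitaries $u=(u(i))_{i\in\mathbb{N}}$, $v=(v(i))_{i\in\mathbb{N}}$ of $\ell^\infty(M_m(\mathbb{C}))$, let $\Delta_I(u,v)=\sup_{i,j\in I}\|u(i)u(j)^*-v(i)v(j)^*\|$. Then for all $I\subseteq\mathbb{N}$ and all such $u,v$: (1) $\Delta_I(u,v)\le 2\sup_{i\in I}\|u(i)-v(i)\|$; (2) $\Delta_I(u,v)\ge\sup_{j\in I}\|u(j)-v(j)\|-\inf_{i\in I}\|u(i)-v(i)\|$; in particular, if $u(k)=v(k)$ for some $k\in I$, then $\Delta_I(u,v)\ge\sup_{j\in I}\|u(j)-v(j)\|$; (3) if $w$ is a unitary in $M_m(\mathbb{C})$, then $\Delta_I(u,v)=\Delta_I(u,vw)$, where $(vw)(i)=v(i)w$; (4) if $J\subseteq\mathbb{N}$ and $I\cap J\neq\emptyset$, then $\Delta_{I\cup J}(u,v)\le\Delta_I(u,v)+\Delta_J(u,v)$; (5) $\inf_{w}\sup_{i\in I}\|u(i)-v(i)w\|\le\Delta_I(u,v)\le 2\inf_{w}\sup_{i\in I}\|u(i)-v(i)w\|$, where $w$ ranges over the unitary group of $M_m(\mathbb{C})$.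
   Context: $m\ge1$; $\ell^\infty(M_m(\mathbb{C}))$ is the $\mathrm{C}^*$-algebra of norm-bounded sequences of $m\times m$ complex matrices, so a unitary $u$ of it is a sequence $(u(i))_{i\in\mathbb{N}}$ of unitary matrices; norms are operator norms on $M_m(\mathbb{C})$. *)

(* Defs.v *)
From HB Require Import structures.
From mathcomp Require Import all_boot all_order all_algebra.
From mathcomp Require Import all_classical all_reals.
From mathcomp Require Import complex.
Set Implicit Arguments. Unset Strict Implicit. Unset Printing Implicit Defensive.
Import Order.TTheory GRing.Theory Num.Theory ComplexField.
Local Open Scope classical_set_scope.
Local Open Scope ring_scope.

(* Complex numbers: R[i] = complex R over a realType R (so that sup/inf exist). *)

Definition adjmx (R : realType) (m : nat) (A : 'M[R[i]]_m) : 'M[R[i]]_m :=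
  (map_mx Num.conj A)^T.

Definition unitary_mx (R : realType) (m : nat) (A : 'M[R[i]]_m) : Prop :=
  A *m adjmx A = 1%:M.

Definition vnorm (R : realType) (m : nat) (x : 'cV[R[i]]_m) : R :=
  Num.sqrt (\sum_(k < m) (complex.Re (x k 0) ^+ 2 + complex.Im (x k 0) ^+ 2)).

Definition opnorm (R : realType) (m : nat) (A : 'M[R[i]]_m) : R :=
  sup [set vnorm (A *m x) | x in [set x : 'cV[R[i]]_m | vnorm x <= 1]].

(* Delta_I(u,v) = sup_{i,j in I} || u(i) u(j)^* - v(i) v(j)^* ||  (sup of empty set is 0) *)
Definition Delta (R : realType) (m : nat) (I : set nat) (u v : nat -> 'M[R[i]]_m) : R :=
  sup [set opnorm (u ij.1 *m adjmx (u ij.2) - v ij.1 *m adjmx (v ij.2))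
      | ij in [set ij : nat * nat | I ij.1 /\ I ij.2]].

Definition supdist (R : realType) (m : nat) (I : set nat) (u v : nat -> 'M[R[i]]_m) : R :=
  sup [set opnorm (u i - v i) | i in I].

Definition infdist (R : realType) (m : nat) (I : set nat) (u v : nat -> 'M[R[i]]_m) : R :=
  inf [set opnorm (u i - v i) | i in I].

(* Main.v *)
Require Import Defs.
From HB Require Import structures.
From mathcomp Require Import all_boot all_order all_algebra.
From mathcomp Require Import all_classical all_reals.
From mathcomp Require Import complex.
From mathcomp Require Import ring lra.
Import Order.TTheory GRing.Theory Num.Theory ComplexField.
Set Implicit Arguments. Unset Strict Implicit. Unset Printing Implicit Defensive.
Local Open Scope classical_set_scope.
Local Open Scope ring_scope.

Section Vn.
Variable R : realType.

Lemma CS_real (n : nat) (F1 F2 G1 G2 : 'I_n -> R) :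
  (\sum_k (F1 k * G1 k + F2 k * G2 k)) ^+ 2 <=
  (\sum_k (F1 k ^+ 2 + F2 k ^+ 2)) * (\sum_k (G1 k ^+ 2 + G2 k ^+ 2)).
Proof.
set A := \sum_k (F1 k ^+ 2 + F2 k ^+ 2).
set B := \sum_k (G1 k ^+ 2 + G2 k ^+ 2).
set C := \sum_k (F1 k * G1 k + F2 k * G2 k).
have B0 : 0 <= B by apply: sumr_ge0 => k _; rewrite addr_ge0 ?sqr_ge0.
have A0 : 0 <= A by apply: sumr_ge0 => k _; rewrite addr_ge0 ?sqr_ge0.
have E : forall b c : R, \sum_k ((b * F1 k - c * G1 k) ^+ 2 + (b * F2 k - c * G2 k) ^+ 2)
   = b ^+ 2 * A - (2 * b * c) * C + c ^+ 2 * B.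
  move=> b c; rewrite /A /B /C !mulr_sumr -sumrB -big_split /=.
  by apply: eq_bigr => k _; ring.
have P : 0 <= B * (A * B - C ^+ 2).
  have -> : B * (A * B - C ^+ 2) = B ^+ 2 * A - (2 * B * C) * C + C ^+ 2 * B by ring.
  by rewrite -E; apply: sumr_ge0 => k _; rewrite addr_ge0 ?sqr_ge0.
have [Bz|Bp] := eqVneq B 0.
  have G0 : forall k, G1 k = 0 /\ G2 k = 0.
    move=> k; have := @psumr_eq0P _ _ xpredT (fun k => G1 k ^+ 2 + G2 k ^+ 2)
       (fun k _ => addr_ge0 (sqr_ge0 _) (sqr_ge0 _)) Bz k isT.
    move/eqP; rewrite paddr_eq0 ?sqr_ge0 // !sqrf_eq0 => /andP[/eqP -> /eqP ->] //.
  have -> : C = 0.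
    by rewrite /C big1 // => k _; case: (G0 k) => -> ->; rewrite !mulr0 addr0.
  by rewrite expr0n /= mulr_ge0.
have Bpos : 0 < B by rewrite lt_def Bp B0.
by rewrite -subr_ge0; move: P; rewrite pmulr_rge0.
Qed.

Variable m : nat.
Implicit Types x y : 'cV[R[i]]_m.

Definition sq x := \sum_(k < m) (complex.Re (x k 0) ^+ 2 + complex.Im (x k 0) ^+ 2).

Lemma sq_ge0 x : 0 <= sq x.
Proof. by apply: sumr_ge0 => k _; rewrite addr_ge0 ?sqr_ge0. Qed.

Lemma vnormE x : vnorm x = Num.sqrt (sq x). Proof. by []. Qed.

Lemma vnorm_ge0 x : 0 <= vnorm x. Proof. exact: sqrtr_ge0. Qed.

Lemma ReS (n : nat) (F : 'I_n -> R[i]) :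
  complex.Re (\sum_(k < n) F k) = \sum_(k < n) complex.Re (F k).
Proof. exact: (raddf_sum (@complex.Re R : Rcomplex R -> R)). Qed.

Definition adjg p q (A : 'M[R[i]]_(p, q)) : 'M[R[i]]_(q, p) := (map_mx Num.conj A)^T.

Lemma sq_adj x : sq x = complex.Re ((adjg x *m x) 0 0).
Proof.
rewrite !mxE ReS /sq; apply: eq_bigr => k _.
rewrite /adjg !mxE; case: (x k 0) => a b /=; ring.
Qed.

Lemma le_sqrt_nonneg (a b : R) : 0 <= b -> a <= b ^+ 2 -> Num.sqrt a <= b.
Proof.
move=> b0 h; rewrite -(ger0_norm b0) -sqrtr_sqr.
by rewrite ler_sqrt ?sqr_ge0.
Qed.

Lemma vnormD x y : vnorm (x + y) <= vnorm x + vnorm y.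
Proof.
rewrite !vnormE; apply: le_sqrt_nonneg; first by rewrite addr_ge0 ?sqrtr_ge0.
set A := sq x; set B := sq y.
set C := \sum_k (complex.Re (x k 0) * complex.Re (y k 0) + complex.Im (x k 0) * complex.Im (y k 0)).
have E : sq (x + y) = A + 2 * C + B.
  rewrite /sq /A /B /C mulr_sumr -!big_split /=; apply: eq_bigr => k _.
  rewrite !mxE; case: (x k 0) => a b; case: (y k 0) => c d /=; ring.
have CS : C ^+ 2 <= A * B by apply: CS_real.
have A0 := sq_ge0 x; have B0 := sq_ge0 y.
have CAB : C <= Num.sqrt A * Num.sqrt B.
  rewrite -sqrtrM //; apply: le_trans (ler_norm C) _.
  by rewrite -sqrtr_sqr ler_sqrt ?mulr_ge0.
rewrite E sqrrD !sqr_sqrtr //.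
have : 2 * C <= 2 * (Num.sqrt A * Num.sqrt B) by rewrite ler_pM2l.
lra.
Qed.

Definition cabs (c : R[i]) := Num.sqrt (complex.Re c ^+ 2 + complex.Im c ^+ 2).

Lemma vnormZ (c : R[i]) x : vnorm (c *: x) = cabs c * vnorm x.
Proof.
rewrite !vnormE /cabs -sqrtrM ?addr_ge0 ?sqr_ge0 //; congr Num.sqrt.
rewrite /sq mulr_sumr; apply: eq_bigr => k _; rewrite !mxE.
by case: c => a b; case: (x k 0) => c d /=; ring.
Qed.

Lemma cabs_le x j : cabs (x j 0) <= vnorm x.
Proof.
rewrite vnormE /cabs ler_sqrt ?sq_ge0 // /sq (bigD1 j) //= lerDl.
by apply: sumr_ge0 => k _; rewrite addr_ge0 ?sqr_ge0.
Qed.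

Lemma vnorm_sum (n : nat) (F : 'I_n -> 'cV[R[i]]_m) :
  vnorm (\sum_(k < n) F k) <= \sum_(k < n) vnorm (F k).
Proof.
apply: (big_ind2 (fun a b => vnorm a <= b)) => //.
- by rewrite vnormE /sq big1 ?sqrtr0 // => k _; rewrite !mxE /= expr0n /= addr0.
- move=> a b c d h1 h2; apply: le_trans (vnormD _ _) _; exact: lerD.
Qed.

Lemma vnorm0 : vnorm (0 : 'cV[R[i]]_m) = 0.
Proof. by rewrite vnormE /sq big1 ?sqrtr0 // => k _; rewrite !mxE /= expr0n /= addr0. Qed.

Lemma vnormN x : vnorm (- x) = vnorm x.
Proof.
rewrite !vnormE /sq; congr Num.sqrt; apply: eq_bigr => k _; rewrite !mxE.
by case: (x k 0) => a b /=; ring.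
Qed.

End Vn.

Section Op.
Variable R : realType.
Variable m : nat.
Implicit Types A B U : 'M[R[i]]_m.

Lemma adjgM p q r (A : 'M[R[i]]_(p, q)) (B : 'M[R[i]]_(q, r)) :
  adjg (A *m B) = adjg B *m adjg A.
Proof. by rewrite /adjg map_mxM trmx_mul. Qed.

Lemma adjgK p q (A : 'M[R[i]]_(p, q)) : adjg (adjg A) = A.
Proof. by apply/matrixP => i j; rewrite /adjg !mxE conjCK. Qed.

Lemma adjmxE A : adjmx A = adjg A. Proof. by []. Qed.

Lemma adjg1 : adjg (1%:M : 'M[R[i]]_m) = 1%:M.
Proof. by apply/matrixP => i j; rewrite /adjg !mxE eq_sym rmorph_nat. Qed.

Lemma unitaryE U : unitary_mx U -> U *m adjmx U = 1%:M. Proof. by []. Qed.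

Lemma unitaryE' U : unitary_mx U -> adjmx U *m U = 1%:M.
Proof. exact: mulmx1C. Qed.

Lemma unitary_adj U : unitary_mx U -> unitary_mx (adjmx U).
Proof. by move=> hU; rewrite /unitary_mx !adjmxE adjgK -adjmxE unitaryE'. Qed.

Lemma unitaryM U V : unitary_mx U -> unitary_mx V -> unitary_mx (U *m V).
Proof.
move=> hU hV; rewrite /unitary_mx adjmxE adjgM -!adjmxE mulmxA -(mulmxA U).
by rewrite hV mulmx1 hU.
Qed.

Lemma unitary1 : unitary_mx (1%:M : 'M[R[i]]_m).
Proof. by rewrite /unitary_mx adjmxE adjg1 mulmx1. Qed.

Lemma vnormU U (x : 'cV[R[i]]_m) : unitary_mx U -> vnorm (U *m x) = vnorm x.
Proof.
move=> hU; rewrite !vnormE !sq_adj adjgM mulmxA -(mulmxA (adjg x)).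
by rewrite -adjmxE unitaryE' // mulmx1.
Qed.

Definition Kb A := \sum_(j < m) vnorm (col j A).

Lemma mulmx_col A (x : 'cV[R[i]]_m) : A *m x = \sum_(j < m) x j 0 *: col j A.
Proof.
apply/matrixP => i k; rewrite !mxE summxE; apply: eq_bigr => j _.
by rewrite !mxE (ord1 k) mulrC.
Qed.

Lemma Kb_bound A (x : 'cV[R[i]]_m) : vnorm x <= 1 -> vnorm (A *m x) <= Kb A.
Proof.
move=> hx; rewrite mulmx_col; apply: le_trans (vnorm_sum _) _.
apply: ler_sum => j _; rewrite vnormZ; apply: ler_piMl; first exact: vnorm_ge0.
exact: le_trans (cabs_le _ _) hx.
Qed.

Definition Sop A := [set vnorm (A *m x) | x in [set x : 'cV[R[i]]_m | vnorm x <= 1]].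

Lemma Sop_n0 A : Sop A !=set0.
Proof. by exists (vnorm (A *m 0)); exists 0 => //=; rewrite vnorm0 ler01. Qed.

Lemma Sop_sup A : has_sup (Sop A).
Proof.
split; first exact: Sop_n0.
by exists (Kb A) => _ [x hx <-]; exact: Kb_bound.
Qed.

Lemma opnorm_ub A (x : 'cV[R[i]]_m) : vnorm x <= 1 -> vnorm (A *m x) <= opnorm A.
Proof. by move=> hx; apply: (sup_upper_bound (Sop_sup A)); exists x. Qed.

Lemma opnorm_le A c : (forall x : 'cV[R[i]]_m, vnorm x <= 1 -> vnorm (A *m x) <= c) ->
  opnorm A <= c.
Proof. by move=> h; apply: ge_sup; [exact: Sop_n0 | move=> _ [x hx <-]; exact: h]. Qed.

Lemma opnorm_ge0 A : 0 <= opnorm A.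
Proof.
apply: le_trans (opnorm_ub A (x := 0) _); first exact: vnorm_ge0.
by rewrite vnorm0 ler01.
Qed.

Lemma opnormD A B : opnorm (A + B) <= opnorm A + opnorm B.
Proof.
apply: opnorm_le => x hx; rewrite mulmxDl; apply: le_trans (vnormD _ _) _.
by apply: lerD; apply: opnorm_ub.
Qed.

Lemma opnormN A : opnorm (- A) = opnorm A.
Proof.
apply/eqP; rewrite eq_le; apply/andP; split; apply: opnorm_le => x hx.
  by rewrite mulNmx vnormN; exact: opnorm_ub.
by rewrite -vnormN -mulNmx; exact: opnorm_ub.
Qed.

Lemma opnormB A B : opnorm (A - B) <= opnorm A + opnorm B.
Proof. by rewrite -(opnormN B); exact: opnormD. Qed.

Lemma opnorm0 : opnorm (0 : 'M[R[i]]_m) = 0.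
Proof.
apply/eqP; rewrite eq_le opnorm_ge0 andbT; apply: opnorm_le => x _.
by rewrite mul0mx vnorm0.
Qed.

Lemma opnormUl U A : unitary_mx U -> opnorm (U *m A) = opnorm A.
Proof.
move=> hU; apply/eqP; rewrite eq_le; apply/andP; split; apply: opnorm_le => x hx.
  by rewrite -mulmxA vnormU //; exact: opnorm_ub.
by rewrite -(vnormU _ hU) mulmxA; exact: opnorm_ub.
Qed.

Lemma opnormUr U A : unitary_mx U -> opnorm (A *m U) = opnorm A.
Proof.
move=> hU; apply/eqP; rewrite eq_le; apply/andP; split; apply: opnorm_le => x hx.
  by rewrite -mulmxA; apply: opnorm_ub; rewrite vnormU.
have -> : A *m x = (A *m U) *m (adjmx U *m x).
  by rewrite -mulmxA (mulmxA U) unitaryE // mul1mx.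
apply: opnorm_ub; rewrite vnormU //; exact: unitary_adj.
Qed.

Lemma opnorm_unitary U : unitary_mx U -> opnorm U <= 1.
Proof. by move=> hU; apply: opnorm_le => x hx; rewrite vnormU. Qed.

End Op.

Section SupImg.
Variable R : realType.
Variables (T : Type) (f : T -> R) (P : set T).

Lemma sup_img_ub B t : (forall t, P t -> f t <= B) -> P t -> f t <= sup (image P f).
Proof.
move=> hB Pt; apply: (sup_upper_bound); last by exists t.
split; first by exists (f t), t.
by exists B => _ [s Ps <-]; exact: hB.
Qed.

Lemma img_empty : ~ (exists t, P t) -> image P f = set0.
Proof.
move=> hP; apply/funext => y; apply/propext; split => // -[t Pt _].
by apply: hP; exists t.
Qed.

Lemma sup_img_le c : 0 <= c -> (forall t, P t -> f t <= c) -> sup (image P f) <= c.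
Proof.
move=> c0 h; have [[t Pt]|nP] := pselect (exists t, P t).
  by apply: ge_sup; [exists (f t), t | move=> _ [s Ps <-]; exact: h].
by rewrite img_empty // sup0.
Qed.

Lemma sup_img_ge0 B : (forall t, P t -> f t <= B) -> (forall t, P t -> 0 <= f t) ->
  0 <= sup (image P f).
Proof.
move=> hB h0; have [[t Pt]|nP] := pselect (exists t, P t).
  by apply: le_trans (h0 t Pt) (sup_img_ub hB Pt).
by rewrite img_empty // sup0.
Qed.

Lemma inf_img_le t : (forall t, P t -> 0 <= f t) -> P t -> inf (image P f) <= f t.
Proof.
move=> h0 Pt; apply: ge_inf; last by exists t.
by exists 0 => _ [s Ps <-]; exact: h0.
Qed.

Lemma inf_img_ge c t : P t -> (forall t, P t -> c <= f t) -> c <= inf (image P f).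
Proof.
by move=> Pt h; apply: lb_le_inf; [exists (f t), t | move=> _ [s Ps <-]; exact: h].
Qed.

Lemma inf_img_empty : ~ (exists t, P t) -> inf (image P f) = 0.
Proof. by move=> nP; rewrite img_empty // inf0. Qed.

End SupImg.

Section Key.
Variable R : realType.
Variable m : nat.
Variables u v : nat -> 'M[R[i]]_m.
Hypothesis hu : forall i, unitary_mx (u i).
Hypothesis hv : forall i, unitary_mx (v i).

Lemma uUK (A : 'M[R[i]]_m) i : A *m adjmx (u i) *m u i = A.
Proof. by rewrite -mulmxA (unitaryE' (hu i)) mulmx1. Qed.
Lemma vUK (A : 'M[R[i]]_m) i : A *m adjmx (v i) *m v i = A.
Proof. by rewrite -mulmxA (unitaryE' (hv i)) mulmx1. Qed.
Lemma uKU (A : 'M[R[i]]_m) i : A *m u i *m adjmx (u i) = A.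
Proof. by rewrite -mulmxA (unitaryE (hu i)) mulmx1. Qed.
Lemma vKU (A : 'M[R[i]]_m) i : A *m v i *m adjmx (v i) = A.
Proof. by rewrite -mulmxA (unitaryE (hv i)) mulmx1. Qed.

Definition Dm i j := opnorm (u i *m adjmx (u j) - v i *m adjmx (v j)).
Definition nm i := opnorm (u i - v i).

Lemma K1 i j : Dm i j <= nm i + nm j.
Proof.
rewrite /Dm /nm.
have -> : u i *m adjmx (u j) - v i *m adjmx (v j) =
  (u i - v i) *m adjmx (u j) + v i *m (adjmx (v j) *m (v j - u j) *m adjmx (u j)).
  rewrite !(mulmxBl, mulmxBr) !mulmxA !(uUK, vUK, uKU, vKU).
  by rewrite addrA subrK.
apply: le_trans (opnormD _ _) _; apply: lerD.
  by rewrite (opnormUr _ (unitary_adj (hu j))).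
rewrite (opnormUl _ (hv i)) (opnormUr _ (unitary_adj (hu j))).
by rewrite (opnormUl _ (unitary_adj (hv j))) -opprB opnormN.
Qed.

Lemma K2 i j : nm j <= Dm j i + nm i.
Proof.
rewrite /Dm /nm.
have -> : u j - v j =
  (u j *m adjmx (u i) - v j *m adjmx (v i)) *m u i - v j *m (adjmx (v i) *m (v i - u i)).
  rewrite !(mulmxBl, mulmxBr) !mulmxA !(uUK, vUK, uKU, vKU).
  by rewrite opprB addrA subrK.
apply: le_trans (opnormB _ _) _; apply: lerD.
  by rewrite (opnormUr _ (hu i)).
rewrite (opnormUl _ (hv j)) (opnormUl _ (unitary_adj (hv i))).
by rewrite -opprB opnormN.
Qed.

Lemma K3 i j k : Dm i j <= Dm i k + Dm k j.
Proof.
rewrite /Dm.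
have -> : u i *m adjmx (u j) - v i *m adjmx (v j) =
  (u i *m adjmx (u k) - v i *m adjmx (v k)) *m (v k *m adjmx (v j)) +
  (u i *m adjmx (u k)) *m (u k *m adjmx (u j) - v k *m adjmx (v j)).
  rewrite !(mulmxBl, mulmxBr) !mulmxA !(uUK, vUK, uKU, vKU).
  by rewrite [in RHS]addrC addrA subrK.
apply: le_trans (opnormD _ _) _; apply: lerD.
  by rewrite (opnormUr _ (unitaryM (hv k) (unitary_adj (hv j)))).
by rewrite (opnormUl _ (unitaryM (hu i) (unitary_adj (hu k)))).
Qed.

End Key.

Section Arith.
Variable R : realType.
Implicit Types a b s x y d : R.
Lemma ar1 a b : a <= 1 -> b <= 1 -> a + b <= 2. Proof. lra. Qed.
Lemma ar2 a b s : a <= s -> b <= s -> a + b <= 2 * s. Proof. lra. Qed.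
Lemma ar3 s d x : s - d <= x -> s - x <= d. Proof. lra. Qed.
Lemma ar4 d x y : d <= x -> 0 <= y -> d <= x + y. Proof. lra. Qed.
Lemma ar5 d x y : d <= y -> 0 <= x -> d <= x + y. Proof. lra. Qed.
Lemma ar6 a b x y : a <= y -> b <= x -> a + b <= x + y. Proof. lra. Qed.
End Arith.

Section Key2.
Variable R : realType.
Variable m : nat.
Variables u v : nat -> 'M[R[i]]_m.
Hypothesis hu : forall i, unitary_mx (u i).
Hypothesis hv : forall i, unitary_mx (v i).

Lemma Dm_le2 i j : Dm u v i j <= 2.
Proof.
apply: le_trans (opnormB _ _) _.
apply: ar1; apply: opnorm_unitary.
  exact: (unitaryM (hu i) (unitary_adj (hu j))).
exact: (unitaryM (hv i) (unitary_adj (hv j))).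
Qed.

Lemma nm_le2 i : nm u v i <= 2.
Proof.
apply: le_trans (opnormB _ _) _.
exact: ar1 (opnorm_unitary (hu i)) (opnorm_unitary (hv i)).
Qed.

Lemma DeltaE I : Delta I u v =
  sup (image [set ij : nat * nat | I ij.1 /\ I ij.2] (fun ij => Dm u v ij.1 ij.2)).
Proof. by rewrite /Delta /supdist /infdist /Dm /nm. Qed.

Lemma supdistE I : supdist I u v = sup (image I (nm u v)).
Proof. by rewrite /Delta /supdist /infdist /Dm /nm. Qed.

Lemma infdistE I : infdist I u v = inf (image I (nm u v)).
Proof. by rewrite /Delta /supdist /infdist /Dm /nm. Qed.

Lemma Delta_ub I i j : I i -> I j -> Dm u v i j <= Delta I u v.
Proof.
move=> Ii Ij; rewrite DeltaE.
apply: (sup_img_ub (B := 2) (t := (i, j))); last by split.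
by move=> [a b] _; exact: Dm_le2.
Qed.

Lemma Delta_ge0 I : 0 <= Delta I u v.
Proof.
rewrite DeltaE; apply: (sup_img_ge0 (B := 2)) => -[a b] _; [exact: Dm_le2|exact: opnorm_ge0].
Qed.

Lemma supdist_ub I i : I i -> nm u v i <= supdist I u v.
Proof.
move=> Ii; rewrite supdistE; apply: (sup_img_ub (B := 2)) Ii => k _; exact: nm_le2.
Qed.

Lemma supdist_ge0 I : 0 <= supdist I u v.
Proof.
rewrite supdistE; apply: (sup_img_ge0 (B := 2)) => k _; [exact: nm_le2|exact: opnorm_ge0].
Qed.

Lemma part1 I : Delta I u v <= 2 * supdist I u v.
Proof.
rewrite DeltaE; apply: sup_img_le; first by rewrite mulr_ge0 ?supdist_ge0.
move=> [i j] /= [Ii Ij]; apply: le_trans (K1 hu hv i j) _.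
exact: ar2 (supdist_ub Ii) (supdist_ub Ij).
Qed.

Lemma part2a I : supdist I u v - infdist I u v <= Delta I u v.
Proof.
have [[k Ik]|nI] := pselect (exists k, I k); last first.
  rewrite supdistE infdistE inf_img_empty // img_empty // sup0 subr0.
  exact: Delta_ge0.
have key : forall i, I i -> supdist I u v <= Delta I u v + nm u v i.
  move=> i Ii; rewrite supdistE; apply: sup_img_le.
    by rewrite addr_ge0 ?Delta_ge0 ?opnorm_ge0.
  move=> j Ij; apply: le_trans (K2 hu hv i j) _.
  by rewrite lerD2r Delta_ub.
apply: ar3.
  rewrite infdistE; apply: (inf_img_ge (t := k)) => // i Ii.
  by rewrite lerBlDl key.
Qed.

Lemma part2b I : (exists2 k, I k & u k = v k) -> supdist I u v <= Delta I u v.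
Proof.
move=> [k Ik ek]; rewrite supdistE; apply: sup_img_le; first exact: Delta_ge0.
move=> j Ij; apply: le_trans (K2 hu hv k j) _.
by rewrite /nm ek subrr opnorm0 addr0 Delta_ub.
Qed.

Lemma Delta_ext I (v' : nat -> 'M[R[i]]_m) :
  (forall i j, v i *m adjmx (v j) = v' i *m adjmx (v' j)) ->
  Delta I u v = Delta I u v'.
Proof.
move=> h; rewrite /Delta; apply: (f_equal sup); apply: (f_equal (image _)).
by apply: funext => ij; rewrite h.
Qed.

Lemma part3 I (w : 'M[R[i]]_m) : unitary_mx w ->
  Delta I u v = Delta I u (fun i => v i *m w).
Proof.
move=> hw; apply: Delta_ext => i j; cbv beta.
rewrite [adjmx (_ *m w)]adjmxE adjgM -!adjmxE mulmxA -(mulmxA (v i)) (unitaryE hw) mulmx1.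
reflexivity.
Qed.

Lemma part4 I J : I `&` J != set0 -> Delta (I `|` J) u v <= Delta I u v + Delta J u v.
Proof.
move=> /set0P [k [Ik Jk]].
rewrite (DeltaE (I `|` J)); apply: sup_img_le; first by rewrite addr_ge0 ?Delta_ge0.
move=> [i j] /= [Ii Ij].
have dI := Delta_ge0 I; have dJ := Delta_ge0 J.
case: Ii => Ii; case: Ij => Ij.
- exact: ar4 (Delta_ub Ii Ij) dJ.
- apply: le_trans (K3 hu hv i j k) _.
  by apply: lerD; apply: Delta_ub.
- apply: le_trans (K3 hu hv i j k) _.
  exact: ar6 (Delta_ub Ii Jk) (Delta_ub Ik Ij).
- exact: ar5 (Delta_ub Ii Ij) dI.
Qed.

End Key2.

Section Arith2.
Variable R : realType.
Lemma ar7 (D x : R) : D / 2 <= x -> D <= 2 * x. Proof. lra. Qed.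
Lemma ar8 (D s : R) : D <= 2 * s -> D / 2 <= s. Proof. lra. Qed.
End Arith2.

Section P5.
Variable R : realType.
Variable m : nat.
Variables u v : nat -> 'M[R[i]]_m.
Hypothesis hu : forall i, unitary_mx (u i).
Hypothesis hv : forall i, unitary_mx (v i).

Lemma part5 I :
  inf [set supdist I u (fun i => v i *m w) | w in [set w : 'M[R[i]]_m | unitary_mx w]]
    <= Delta I u v /\
  Delta I u v <= 2 * inf [set supdist I u (fun i => v i *m w)
                         | w in [set w : 'M[R[i]]_m | unitary_mx w]].
Proof.
have hvw : forall w, unitary_mx w -> forall i, unitary_mx (v i *m w).
  by move=> w hw i; exact: unitaryM (hv i) hw.
have sge0 : forall w, [set w : 'M[R[i]]_m | unitary_mx w] w ->
    0 <= supdist I u (fun i => v i *m w).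
  by move=> w hw; exact: (supdist_ge0 hu (hvw w hw) I).
split.
  have [[k Ik]|nI] := pselect (exists k, I k).
    pose w0 := adjmx (v k) *m u k.
    have hw0 : unitary_mx w0 by exact: unitaryM (unitary_adj (hv k)) (hu k).
    apply: le_trans (inf_img_le sge0 hw0) _.
    rewrite (supdistE u (fun i => v i *m w0)); apply: sup_img_le; first exact: Delta_ge0 hu hv I.
    move=> i Ii; rewrite /nm /w0.
    have -> : u i - v i *m (adjmx (v k) *m u k) =
        (u i *m adjmx (u k) - v i *m adjmx (v k)) *m u k.
      by rewrite mulmxBl (uUK hu) mulmxA.
    rewrite (opnormUr _ (hu k)); exact: (Delta_ub hu hv Ii Ik).
  apply: le_trans (inf_img_le sge0 (unitary1 R m)) _.
  rewrite (supdistE u (fun i => v i *m 1%:M)) img_empty // sup0; exact: Delta_ge0 hu hv I.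
apply: ar7; apply: (inf_img_ge (t := 1%:M)); first exact: unitary1.
move=> w hw; apply: ar8; rewrite (part3 u v I hw); exact: (part1 hu (hvw w hw) I).
Qed.

End P5.

Unset Implicit Arguments. Set Strict Implicit.
Theorem lemma4p2 (R : realType) (m : nat) (m_gt0 : (0 < m)%N)
  (I : set nat) (u v : nat -> 'M[R[i]]_m)
  (hu : forall i, unitary_mx (u i)) (hv : forall i, unitary_mx (v i)) :
  [/\ Delta I u v <= 2 * supdist I u v,
      Delta I u v >= supdist I u v - infdist I u v
      /\ ((exists2 k, I k & u k = v k) -> Delta I u v >= supdist I u v),
      (forall w : 'M[R[i]]_m, unitary_mx w ->
         Delta I u v = Delta I u (fun i => v i *m w)),
      (forall J : set nat, I `&` J != set0 ->
         Delta (I `|` J) u v <= Delta I u v + Delta J u v) &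
      let d := inf [set supdist I u (fun i => v i *m w)
                   | w in [set w : 'M[R[i]]_m | unitary_mx w]] in
      d <= Delta I u v /\ Delta I u v <= 2 * d].
Proof.
split.
- exact (part1 hu hv I).
- split; [exact (part2a hu hv I) | exact (part2b hu hv (I:=I))].
- move=> w hw; exact (part3 u v I hw).
- move=> J hIJ; exact (part4 hu hv hIJ).
- exact (part5 hu hv I).
Qed.
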